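(* Let $C\subseteq\mathbb{F}_q^n$ be an $[n,k]$ linear code with $n-k\ge2$ and parity-check matrix $H\in\mathbb{F}_q^{(n-k)\times n}$ of rank $n-k$. Let $u\ge1$ satisfy $\frac{n-k-1}{q^u-1}<1$, and let $p\in\left(\frac{n-k-1}{q^u-1},1\right)$. Put $m=\lceil (n-k-1)/p\rceil$. Then $n-k\le m\le q^u-1$, there exists an MDS code with parameters $[m,n-k,m-(n-k)+1]$ over $\mathbb{F}_{q^u}$, and if $\bar G\in\mathbb{F}_{q^u}^{(n-k)\times m}$ is a generator matrix of any such code, then the list $S$ of the $m$ rows of $\bar G^TH$ is a test set for $C$ with designed probability $\frac{n-k-1}{m}\le p$; in particular $S$ is a test set for $C$ with designed probability $p$.
   Context: $\mathbb{F}_{q^u}$ is the degree-$u$ extension of $\mathbb{F}_q$; $(\mathbf{x},\mathbf{y})=\sum_{j=1}^n x_jy_j$. A test set with designed probability $p\in(0,1)$ for $C$ is a finite nonempty collection $S$ of vectors in $\mathbb{F}_{q^u}^n$ (counted with multiplicity) such that for every $\mathbf{x}\in\mathbb{F}_q^n$: (1) $\mathbf{x}\in C$ iff $(\mathbf{x},\mathbf{y})=0$ for all $\mathbf{y}\in S$; (2) if some $\mathbf{y}\in S$ has $(\mathbf{x},\mathbf{y})\ne0$, then $\#\{\mathbf{y}\in S:(\mathbf{x},\mathbf{y})\ne0\}\ge(1-p)\#S$. *)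

(* Defs.v *)
From HB Require Import structures.
From mathcomp Require Import all_boot all_order all_algebra all_field.
Set Implicit Arguments. Unset Strict Implicit. Unset Printing Implicit Defensive.
Import Order.TTheory GRing.Theory Num.Theory.
Local Open Scope ring_scope.

Definition pairing (F L : fieldType) (f : {rmorphism F -> L}) (n : nat)
  (x : 'rV[F]_n) (y : 'rV[L]_n) : L :=
  \sum_(j < n) f (x 0 j) * y 0 j.

Definition test_set (F L : fieldType) (f : {rmorphism F -> L}) (R : numDomainType)
  (n : nat) (C : {vspace 'rV[F]_n}) (S : seq 'rV[L]_n) (p : R) : Prop :=
  [/\ 0 < p < 1, S != [::] &
    forall x : 'rV[F]_n,
      (x \in C <-> (forall y, y \in S -> pairing f x y = 0)) /\
      ((exists2 y, y \in S & pairing f x y != 0) ->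
        (1 - p) * (size S)%:R <= (count (fun y => pairing f x y != 0) S)%:R)].

Definition wt (K : fieldType) (m : nat) (c : 'rV[K]_m) : nat :=
  #|[set i : 'I_m | c 0 i != 0]|.

Definition has_min_dist (K : fieldType) (m : nat) (D : {vspace 'rV[K]_m}) (d : nat) : Prop :=
  (exists2 c, c \in D & (c != 0) && (wt c == d)) /\
  (forall c, c \in D -> c != 0 -> (d <= wt c)%N).

Definition is_code (K : fieldType) (m : nat) (D : {vspace 'rV[K]_m}) (k d : nat) : Prop :=
  \dim D = k /\ has_min_dist D d.

Definition is_generator_matrix (K : fieldType) (k m : nat) (G : 'M[K]_(k, m))
  (D : {vspace 'rV[K]_m}) : Prop :=
  \rank G = k /\ (forall c, c \in D <-> exists v : 'rV[K]_k, c = v *m G).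

Definition is_parity_check (F : fieldType) (r n : nat) (H : 'M[F]_(r, n))
  (C : {vspace 'rV[F]_n}) : Prop :=
  forall x : 'rV[F]_n, x \in C <-> H *m x^T = 0.

(* Main.v *)
Require Import Defs.
From HB Require Import structures.
From mathcomp Require Import all_boot all_order all_algebra all_field.
From mathcomp Require Import zify ring lra.
Import Order.TTheory GRing.Theory Num.Theory.
Local Open Scope ring_scope.

Lemma wt_poly_bound (L : fieldType) (m r : nat) (a : 'I_m -> L)
  (ainj : injective a) (P : {poly L}) (c : 'rV[L]_m) (hrm : (r <= m)%N) :
  (forall j, c 0 j = P.[a j]) -> P != 0 -> (size P <= r)%N ->
  (m - r + 1 <= wt c)%N.
Proof.
move=> hc hP hs.
set Z := [set j : 'I_m | P.[a j] == 0].
have hw : wt c = #|~: Z|.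
  rewrite /wt; apply: eq_card => j; rewrite !inE hc //.
have hZ : (#|Z| < size P)%N.
  have := @max_poly_roots _ P [seq a j | j <- enum Z] hP.
  rewrite size_map -cardE; apply.
    apply/allP => x /mapP [j]; rewrite mem_enum inE => /eqP hj ->.
    by rewrite /root hj.
  by rewrite map_inj_uniq ?enum_uniq.
rewrite hw; have := cardsC Z; rewrite card_ord => hC.
clearbody Z; move: (size P) hs hZ hC => s hs hZ hC; lia.
Qed.

Lemma wt_pos (L : fieldType) (m : nat) (c : 'rV[L]_m) : (0 < wt c)%N -> c != 0.
Proof.
rewrite /wt card_gt0 => /set0Pn [j]; rewrite inE => hj.
by apply: contraNneq hj => ->; rewrite mxE.
Qed.

Lemma rs_exists (L : finFieldType) (r m : nat) : (1 <= r <= m)%N -> (m < #|L|)%N ->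
  exists D : {vspace 'rV[L]_m}, is_code D r (m - r + 1).
Proof.
move=> /andP [hr1 hrm] hmL.
have hmL' : (m <= #|L|)%N by apply: ltnW.
pose a (j : 'I_m) : L := enum_val (widen_ord hmL' j).
have ainj : injective a.
  move=> i j /enum_val_inj /(congr1 val) /= h; exact: val_inj.
pose V : 'M[L]_(r, m) := \matrix_(i, j) a j ^+ i.
have hsz : forall v : 'rV[L]_r, (size (rVpoly v) <= r)%N.
  by move=> v; rewrite /rVpoly size_poly.
have hV : forall (v : 'rV[L]_r) j, (v *m V) 0 j = (rVpoly v).[a j].
  move=> v j; rewrite (horner_coef_wide _ (hsz v)) !mxE; apply: eq_bigr => i _.
  by rewrite mxE coef_rVpoly_ord.
have hbound : forall v : 'rV[L]_r, v != 0 -> (m - r + 1 <= wt (v *m V))%N.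
  move=> v hv; apply: (@wt_poly_bound L m r a ainj (rVpoly v) (v *m V) hrm (hV v)); last exact: hsz.
  apply: contra hv => /eqP hP; apply/eqP.
  by rewrite -[v]rVpolyK hP linear0.
pose g : 'Hom('rV[L]_r, 'rV[L]_m) := linfun (mulmxr V).
exists (limg g).
have hg : forall v, g v = v *m V by move=> v; rewrite lfunE.
split.
  rewrite limg_dim_eq; first by rewrite dimvf /dim /= mul1n.
  have /eqP -> : lker g == 0%VS.
    apply/lker0P => v w; rewrite !hg => /eqP; rewrite -subr_eq0 -mulmxBl => h.
    apply/eqP; rewrite -subr_eq0; apply/negPn/negP => hne.
    have := hbound _ hne; rewrite (eqP h).
    have -> : wt (0 : 'rV[L]_m) = 0%N.
      by rewrite /wt; apply/eqP; rewrite cards_eq0; apply/eqP/setP => j; rewrite !inE mxE eqxx.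
    lia.
  by rewrite capv0.
split.
  pose Zs := [set widen_ord (n:=r.-1) (m:=m) (ltac:(lia)) i | i in 'I_r.-1].
  pose rs := [seq a j | j <- enum Zs].
  pose P0 := \prod_(x <- rs) ('X - x%:P).
  have hsz0 : size P0 = r.
    rewrite size_prod_XsubC size_map -cardE card_imset ?card_ord; first lia.
    by move=> i j /(congr1 val) /= h; apply: val_inj.
  pose v : 'rV[L]_r := poly_rV P0.
  have hpv : rVpoly v = P0 by rewrite poly_rV_K // hsz0.
  have hcz : forall j, ((v *m V) 0 j == 0) = (j \in Zs).
    move=> j; rewrite hV hpv -/(root P0 (a j)) root_prod_XsubC.
    by rewrite (mem_map ainj) mem_enum.
  have hwt : wt (v *m V) = (m - r + 1)%N.
    have -> : wt (v *m V) = #|~: Zs|.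
      rewrite /wt; apply: eq_card => j; rewrite !inE hcz //.
    have := cardsC Zs; rewrite card_ord card_imset ?card_ord; first lia.
    by move=> i j /(congr1 val) /= h; apply: val_inj.
  exists (v *m V); first by rewrite -hg memv_img ?memvf.
  by rewrite hwt eqxx andbT wt_pos // hwt; lia.
move=> c /memv_imgP [v _ ->] hc; rewrite hg; apply: hbound.
by apply: contraNneq hc => ->; rewrite hg mul0mx.
Qed.

Lemma count_card (T : finType) (P : pred T) : count P (enum T) = #|[set x | P x]|.
Proof. rewrite cardsE cardE /enum_mem size_filter count_filter.
by apply: eq_count => x /=; rewrite andbT. Qed.

Lemma pairing_row (F L : fieldType) (f : {rmorphism F -> L}) (n r m : nat)
  (H : 'M[F]_(r, n)) (G : 'M[L]_(r, m)) (x : 'rV[F]_n) (i : 'I_m) :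
  pairing f x (row i (G^T *m map_mx f H)) = (map_mx f (x *m H^T) *m G) 0 i.
Proof.
rewrite map_mxM -map_trmx -mulmxA.
have -> : (map_mx f H)^T *m G = (G^T *m map_mx f H)^T by rewrite trmx_mul trmxK.
rewrite /pairing !mxE; apply: eq_bigr => j _; rewrite !mxE.
by [].
Qed.

Lemma test_core (F L : fieldType) (f : {rmorphism F -> L}) (n r m : nat)
  (C : {vspace 'rV[F]_n}) (H : 'M[F]_(r, n)) (D : {vspace 'rV[L]_m})
  (G : 'M[L]_(r, m)) (hH : is_parity_check H C)
  (hcode : is_code D r (m - r + 1)) (hG : is_generator_matrix G D)
  (hm0 : (0 < m)%N) (R : numDomainType) (q : R) (hq : 0 < q < 1)
  (hqm : (1 - q) * m%:R <= (m - r + 1)%:R) :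
  test_set f C [seq row i (G^T *m map_mx f H) | i <- enum 'I_m] q.
Proof.
split => //.
  by rewrite -size_eq0 size_map size_enum_ord -lt0n.
move=> x.
set c := map_mx f (x *m H^T) *m G.
have hfree : row_free G by rewrite /row_free hG.1.
have hc0 : (c == 0) = (H *m x^T == 0).
  rewrite /c mulmx_free_eq0 // map_mx_eq0.
  by rewrite -trmx_eq0 trmx_mul trmxK.
split.
  split.
    move=> /hH hx y /mapP [i _ ->]; rewrite pairing_row -/c.
    by move: hc0; rewrite hx eqxx => /eqP ->; rewrite mxE.
  move=> h; apply/hH; apply/eqP; rewrite -hc0; apply/eqP/rowP => i.
  rewrite [RHS]mxE /c -pairing_row; apply: h; apply: map_f; by rewrite mem_enum.
move=> [y /mapP [i _ ->] hy].
rewrite pairing_row -/c in hy.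
have hcnz : c != 0 by apply: contraNneq hy => ->; rewrite mxE.
have hcD : c \in D by apply/hG.2; exists (map_mx f (x *m H^T)).
have hw := hcode.2.2 c hcD hcnz.
rewrite size_map size_enum_ord count_map.
have -> : count (preim (fun i => row i (G^T *m map_mx f H))
              (fun y => pairing f x y != 0)) (enum 'I_m)
          = count (fun i => c 0 i != 0) (enum 'I_m).
  by apply: eq_count => j /=; rewrite pairing_row -/c.
rewrite count_card -/(wt c).
apply: (le_trans hqm); by rewrite ler_nat.
Qed.

Theorem mainTheorem4
  (F L : finFieldType) (u : nat) (f : {rmorphism F -> L})
  (hL : #|L| = (#|F| ^ u)%N)
  (n k : nat) (C : {vspace 'rV[F]_n}) (H : 'M[F]_(n - k, n))
  (hdim : \dim C = k) (hnk : (2 <= n - k)%N)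
  (hH : is_parity_check H C) (hrk : \rank H = (n - k)%N)
  (hu : (1 <= u)%N)
  (R : archiRealFieldType)
  (hq : (n - k - 1)%:R / (#|F| ^ u - 1)%:R < 1 :> R)
  (p : R) (hp1 : (n - k - 1)%:R / (#|F| ^ u - 1)%:R < p) (hp2 : p < 1)
  (m : nat) (hm : m%:Z = Num.ceil ((n - k - 1)%:R / p)) :
  [/\ (n - k <= m)%N, (m <= #|F| ^ u - 1)%N,
      exists D : {vspace 'rV[L]_m}, is_code D (n - k) (m - (n - k) + 1)
    & forall (D : {vspace 'rV[L]_m}) (G : 'M[L]_(n - k, m)),
        is_code D (n - k) (m - (n - k) + 1) ->
        is_generator_matrix G D ->
        let S := [seq row i (G^T *m map_mx f H) | i <- enum 'I_m] in
        [/\ test_set f C S ((n - k - 1)%:R / m%:R : R),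
            (n - k - 1)%:R / m%:R <= p
          & test_set f C S p]].
Proof.
have hF : (1 < #|F|)%N := card_finNzRing_gt1 F.
have hQ : (2 <= #|F| ^ u)%N.
  have := leq_pexp2l (ltnW hF) hu; rewrite expn1; lia.
have hQR : 0 < (#|F| ^ u - 1)%:R :> R by rewrite ltr0n subn_gt0.
have hp0 : 0 < p.
  apply: le_lt_trans hp1; apply: divr_ge0; exact: ler0n.
have hr1 : 0 < (n - k - 1)%:R :> R by rewrite ltr0n; lia.
have ha : (n - k - 1)%:R / p <= m%:R.
  by have := ceil_ge ((n - k - 1)%:R / p); rewrite -hm.
have hrm : (n - k <= m)%N.
  have : (n - k - 1)%:R < m%:R :> R.
    apply: lt_le_trans ha; rewrite ltr_pdivlMr //; nra.
  rewrite ltr_nat; lia.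
have hmQ : (m <= #|F| ^ u - 1)%N.
  rewrite -lez_nat hm ceil_le_int.
  rewrite [X in _ <= X](_ : _ = (#|F| ^ u - 1)%:R) //.
  rewrite ler_pdivrMr //.
  move: hp1; rewrite ltr_pdivrMr // => h; nra.
have hm0 : (0 < m)%N by lia.
have hmR : 0 < m%:R :> R by rewrite ltr0n.
have hqle : (n - k - 1)%:R / m%:R <= p.
  rewrite ler_pdivrMr //; move: ha; rewrite ler_pdivrMr //; nra.
have hnat : (m - (n - k) + 1)%:R = m%:R - (n - k - 1)%:R :> R.
  have -> : (m - (n - k) + 1)%N = (m - (n - k - 1))%N by lia.
  by rewrite natrB //; lia.
split => //.
  apply: rs_exists; first by apply/andP; split; lia.
  rewrite hL; lia.
move=> D G hcode hG S.
split => //.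
  apply: (@test_core _ _ f _ _ _ C H D G hH hcode hG hm0 R).
    apply/andP; split; first exact: divr_gt0.
    rewrite ltr_pdivrMr // mul1r ltr_nat; lia.
  rewrite hnat mulrBl mul1r divfK; last by rewrite lt0r_neq0.
  done.
apply: (@test_core _ _ f _ _ _ C H D G hH hcode hG hm0 R).
  by apply/andP; split.
rewrite hnat; move: hqle; rewrite ler_pdivrMr // => h; nra.
Qed.
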